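(* Let $k$ be a commutative ring and $A$ a commutative $k$-algebra such that $\operatorname{Ider}_k(A)=\operatorname{Der}_k(A)$ and $\operatorname{Der}_k(A)$ is a free $A$-module of finite rank with basis $D^1_1,\dots,D^n_1$, where $D^1,\dots,D^n\in\operatorname{HS}_k(A)$. Then every $k$-linear differential operator $P:A\to A$ of order $\le d$ can be written uniquely as $$P=\sum_{\alpha\in\mathbb N^n,\ |\alpha|\le d}a_\alpha\,\mathbf D_\alpha,\qquad a_\alpha\in A,$$ where $\mathbf D_\alpha=D^1_{\alpha_1}\circ\cdots\circ D^n_{\alpha_n}$.
   Context: $\operatorname{HS}_k(A)$: infinite sequences $D=(D_0,D_1,\dots)$ of $k$-linear maps $A\to A$ with $D_0=\mathrm{Id}$ and $D_i(xy)=\sum_{r+s=i}D_r(x)D_s(y)$. $\operatorname{Ider}_k(A)=\{D_1:D\in\operatorname{HS}_k(A)\}$. $k$-linear differential operators of order $\le d$ are defined inductively: order $0$ = multiplications by elements of $A$; $\varphi\in\operatorname{End}_k(A)$ has order $\le i+1$ iff $\varphi\circ a-a\circ\varphi$ has order $\le i$ for all $a\in A$. *)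

(* Defs.v *)
From HB Require Import structures.
From mathcomp Require Import all_boot all_order all_algebra.
Set Implicit Arguments. Unset Strict Implicit. Unset Printing Implicit Defensive.
Import GRing.Theory.
Local Open Scope ring_scope.

Section HSDefs.
Variables (k : comPzRingType) (A : comAlgType k).

Definition klinear (f : A -> A) : Prop :=
  forall (c : k) (x y : A), f (c *: x + y) = c *: f x + f y.

Definition is_der (f : A -> A) : Prop :=
  klinear f /\ forall x y : A, f (x * y) = f x * y + x * f y.

Definition is_HS (D : nat -> A -> A) : Prop :=
  (forall x, D 0%N x = x) /\ (forall i, klinear (D i)) /\
  (forall (i : nat) (x y : A),
      D i (x * y) = \sum_(r < i.+1) D r x * D (i - r)%N y).

Definition is_ider (f : A -> A) : Prop :=
  exists D, is_HS D /\ D 1%N = f.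

Fixpoint diffop_le (d : nat) (P : A -> A) : Prop :=
  match d with
  | 0%N => exists a : A, forall x, P x = a * x
  | d'.+1 => klinear P /\ forall a : A, diffop_le d' (fun x => P (a * x) - a * P x)
  end.

Definition Dmulti (n : nat) (D : 'I_n -> nat -> A -> A) (alpha : 'I_n -> nat)
  : A -> A :=
  foldr (fun i f => D i (alpha i) \o f) id (enum 'I_n).

End HSDefs.

(* Main.v *)
Require Import Defs.
From HB Require Import structures.
From mathcomp Require Import all_boot all_order all_algebra.
From Stdlib Require Import ClassicalEpsilon FunctionalExtensionality.
Set Implicit Arguments. Unset Strict Implicit. Unset Printing Implicit Defensive.
Import GRing.Theory.
Local Open Scope ring_scope.

Section Main.
Variables (k : comPzRingType) (A : comAlgType k) (n : nat).
Variable D : 'I_n -> nat -> A -> A.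
Hypothesis hHS : forall j, is_HS (D j).

Lemma kl_add (f : A -> A) : klinear f -> forall x y, f (x + y) = f x + f y.
Proof. by move=> hf x y; have := hf 1 x y; rewrite !scale1r. Qed.

Lemma kl_0 (f : A -> A) : klinear f -> f 0 = 0.
Proof. move=> hf; have := kl_add hf 0 0; rewrite addr0 => /eqP.
by rewrite -subr_eq subrr eq_sym => /eqP. Qed.

Lemma kl_sum (f : A -> A) (I : Type) (r : seq I) (P : pred I) (F : I -> A) :
  klinear f -> f (\sum_(i <- r | P i) F i) = \sum_(i <- r | P i) f (F i).
Proof.
move=> hf; elim/big_rec2: _ => [|i y1 y2 _ <-]; first exact: kl_0.
exact: kl_add.
Qed.

Lemma kl_comp (f g : A -> A) : klinear f -> klinear g -> klinear (f \o g).
Proof. by move=> hf hg c x y /=; rewrite hg hf. Qed.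

Lemma kl_id : klinear (@id A).
Proof. by []. Qed.

Lemma D0 i x : D i 0 x = x.
Proof. by case: (hHS i) => h _. Qed.

Lemma Dkl i r : klinear (D i r).
Proof. by case: (hHS i) => _ [h _]. Qed.

Lemma Dmul i m x y : D i m (x * y) = \sum_(r < m.+1) D i r x * D i (m - r)%N y.
Proof. by case: (hHS i) => _ [_ h]. Qed.

Definition Dl (s : seq 'I_n) (f : 'I_n -> nat) : A -> A :=
  foldr (fun i g => D i (f i) \o g) id s.

Lemma DmultiE f : Dmulti D f = Dl (enum 'I_n) f.
Proof. by []. Qed.

Lemma Dl_kl s f : klinear (Dl s f).
Proof. elim: s => [|i s IH] /=; first exact: kl_id. exact: kl_comp (Dkl _ _) IH. Qed.

Lemma Dl_eq s f g : (forall j, j \in s -> f j = g j) -> Dl s f = Dl s g.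
Proof.
elim: s => [|i s IH] //= H; rewrite H ?mem_head // IH // => j js.
by apply: H; rewrite in_cons js orbT.
Qed.

Lemma Dl_zero s f x : (forall j, j \in s -> f j = 0%N) -> Dl s f x = x.
Proof.
elim: s => [|i s IH] //= H; rewrite H ?mem_head // D0 IH // => j js.
by apply: H; rewrite in_cons js orbT.
Qed.

Lemma Dl_unit s f i x : uniq s -> i \in s -> (forall j, f j = (j == i) :> nat) ->
  Dl s f x = D i 1 x.
Proof.
elim: s => [|j s IH] //= /andP [js us] ins H.
case: (eqVneq j i) => [eji|nji].
  subst j; rewrite H eqxx Dl_zero // => j' j's; rewrite H.
  by case: eqP => // e; subst j'; rewrite j's in js.
rewrite H (negbTE nji) D0 IH //.
by move: ins; rewrite in_cons eq_sym (negbTE nji).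
Qed.


Variable N : nat.
Notation M := {ffun 'I_n -> 'I_N.+1}.

Definition nf (a : M) : 'I_n -> nat := fun i => a i.
Definition DM (a : M) : A -> A := Dl (enum 'I_n) (nf a).
Definition deg (a : M) : nat := \sum_(i < n) (a i : nat).
Definition mle (b a : M) : bool := [forall i, (b i <= a i)%N].
Definition mlt (b a : M) : bool := mle b a && (b != a).
Definition msub (a b : M) : M := [ffun i => inord (a i - b i)].
Definition mzero : M := [ffun => ord0].
Definition madd1 (b : M) (j : 'I_n) : M := [ffun i => inord (b i + (i == j))].
Definition msub1 (a : M) (j : 'I_n) : M := [ffun i => inord (a i - (i == j))].
Definition upd (b : M) (i : 'I_n) (t : 'I_N.+1) : M :=
  [ffun j => if j == i then t else b j].

Lemma inord_val_le (m : nat) : (m <= N)%N -> ((inord m : 'I_N.+1) : nat) = m.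
Proof. by move=> h; rewrite inordK. Qed.

Lemma msubE a b i : (msub a b i : nat) = (a i - b i)%N.
Proof. rewrite ffunE inord_val_le //; apply: leq_trans (leq_subr _ _) _.
by rewrite -ltnS. Qed.

Lemma msub1E a j i : (msub1 a j i : nat) = (a i - (i == j))%N.
Proof. rewrite ffunE inord_val_le //; apply: leq_trans (leq_subr _ _) _.
by rewrite -ltnS. Qed.

Lemma comp_le_deg (a : M) i : (a i <= deg a)%N.
Proof. by rewrite /deg (bigD1 i) //= leq_addr. Qed.

Lemma madd1E b j i : (deg b < N)%N -> (madd1 b j i : nat) = (b i + (i == j))%N.
Proof.
move=> h; rewrite ffunE inord_val_le //.
apply: leq_trans (leq_add (comp_le_deg b i) (leq_b1 _)) _; by rewrite addn1.
Qed.

Lemma mzeroE i : (mzero i : nat) = 0%N.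
Proof. by rewrite ffunE. Qed.

Lemma deg_eq0 a : (deg a == 0%N) = (a == mzero).
Proof.
rewrite /deg sum_nat_eq0; apply/forallP/eqP => [H|->].
  by apply/ffunP => i; apply/val_inj; rewrite /= mzeroE; apply/eqP/H.
by move=> i; rewrite mzeroE.
Qed.

Lemma deg_mzero : deg mzero = 0%N.
Proof. by apply/eqP; rewrite deg_eq0. Qed.

Lemma mle_refl a : mle a a.
Proof. by apply/forallP. Qed.

Lemma mle_deg b a : mle b a -> (deg b <= deg a)%N.
Proof. by move/forallP=> H; apply: leq_sum => i _; apply: H. Qed.

Lemma mlt_deg b a : mlt b a -> (deg b < deg a)%N.
Proof.
case/andP=> /forallP H ne.
have [i lti] : exists i, (b i < a i)%N.
  apply/existsP; apply: contraR ne => /existsPn H2; apply/eqP/ffunP => i.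
  apply/val_inj/eqP; rewrite eqn_leq H /=; by rewrite leqNgt H2.
rewrite /deg (bigD1 i) //= [X in (_ < X)%N](bigD1 i) //=.
by rewrite -addSn leq_add // leq_sum // => j _; apply: H.
Qed.

Lemma deg_madd1 b j : (deg b < N)%N -> deg (madd1 b j) = (deg b).+1.
Proof.
move=> h; rewrite /deg (bigD1 j) //= [X in _ = X.+1](bigD1 j) //= madd1E // eqxx.
rewrite addn1 addSn; congr (_ + _)%N.+1; apply: eq_bigr => i ni.
by rewrite madd1E // (negbTE ni) addn0.
Qed.

Lemma DM0 x : DM mzero x = x.
Proof. by rewrite /DM Dl_zero // => j _; rewrite /nf mzeroE. Qed.

Lemma DM_unit (a : M) i x : (forall j, (a j : nat) = (j == i)) -> DM a x = D i 1 x.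
Proof. by move=> H; apply: Dl_unit; rewrite ?enum_uniq ?mem_enum. Qed.

Lemma msub_aa a : msub a a = mzero.
Proof. by apply/ffunP => i; apply/val_inj; rewrite /= msubE mzeroE subnn. Qed.

Lemma DM_kl a : klinear (DM a).
Proof. exact: Dl_kl. Qed.


Definition Bs (s : seq 'I_n) (a b : M) :=
  mle b a && [forall j, (j \notin s) ==> ((b j : nat) == 0%N)].

Lemma upd_upd0 b i t : (upd (upd b i t) i ord0 == b) = ((b i : nat) == 0%N).
Proof.
apply/eqP/eqP => [<-|H]; first by rewrite ffunE eqxx.
apply/ffunP => j; rewrite !ffunE; case: eqP => [->|//].
by apply/val_inj; rewrite /= H.
Qed.

Lemma sum_split i s a (F : M -> A) : i \notin s ->
  \sum_(b' | Bs (i :: s) a b') F b' =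
  \sum_(b | Bs s a b) \sum_(t : 'I_N.+1 | (t <= a i)%N) F (upd b i t).
Proof.
move=> ins; rewrite pair_big_dep.
rewrite [LHS](reindex_onto (fun p : M * 'I_N.+1 => upd p.1 i p.2)
                        (fun b' => (upd b' i ord0, b' i))); last first.
  by move=> b' _; apply/ffunP => j; rewrite !ffunE; case: eqP => [->|].
apply: eq_bigl => [[b t]] /=.
rewrite xpair_eqE upd_upd0 ffunE eqxx eqxx andbT /Bs /mle.
apply/idP/idP.
- case/andP => /andP [/forallP Hle /forallP Hz] /eqP bi0.
  have Hti : (t <= a i)%N by move: (Hle i); rewrite ffunE eqxx.
  rewrite Hti andbT; apply/andP; split.
  + apply/forallP => j; case: (eqVneq j i) => [->|nji]; first by rewrite bi0.
    by move: (Hle j); rewrite ffunE (negbTE nji).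
  + apply/forallP => j; apply/implyP => js.
    case: (eqVneq j i) => [->|nji]; first by rewrite bi0.
    move: (Hz j); rewrite in_cons negb_or nji js ffunE (negbTE nji).
    by move/implyP; apply.
- case/andP => /andP [/forallP Hle /forallP Hz] Hti.
  have bi0 : (b i : nat) = 0%N by apply/eqP; move/implyP: (Hz i); apply.
  rewrite bi0 eqxx andbT; apply/andP; split.
  + apply/forallP => j; rewrite ffunE; case: eqP => [->//|_]; exact: Hle.
  + apply/forallP => j; apply/implyP; rewrite in_cons negb_or => /andP [nji js].
    by rewrite ffunE (negbTE nji); exact: (implyP (Hz j) js).
Qed.

Lemma leibniz_l s (a : M) y x : uniq s ->
  Dl s (nf a) (y * x) =
  \sum_(b | Bs s a b) Dl s (nf (msub a b)) y * Dl s (nf b) x.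
Proof.
elim: s => [|i s IH] /=.
  move=> _; rewrite (big_pred1 mzero) //= => b; rewrite /Bs /=.
  apply/idP/eqP => [/andP [_ /forallP H]|->].
    apply/ffunP => j; apply/val_inj; rewrite /= mzeroE; apply/eqP.
    by have := H j; rewrite ?in_nil.
  apply/andP; split; apply/forallP => j; rewrite ?mzeroE //.
case/andP => ins us; rewrite IH // kl_sum; last exact: Dkl.
rewrite (sum_split _ _ ins); apply: eq_bigr => b Bb.
have E1 t : Dl s (nf (msub a (upd b i t))) = Dl s (nf (msub a b)).
  apply: Dl_eq => j js; rewrite /nf !msubE ffunE; case: eqP => // eji.
  by rewrite -eji js in ins.
have E2 t : Dl s (nf (upd b i t)) = Dl s (nf b).
  apply: Dl_eq => j js; rewrite /nf ffunE; case: eqP => // eji.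
  by rewrite -eji js in ins.
set U := Dl s (nf (msub a b)) y; set V := Dl s (nf b) x.
transitivity (\sum_(t : 'I_N.+1 | (t <= a i)%N)
                 D i (a i - t)%N U * D i t V); last first.
  apply: eq_bigr => t _ /=; rewrite E1 E2 /nf msubE ffunE eqxx //.
have hai : ((a i).+1 <= N.+1)%N by rewrite ltnS -ltnS ltn_ord.
rewrite Dmul (reindex_inj rev_ord_inj) /=.
transitivity (\sum_(r < (a i).+1) D i (a i - r)%N U * D i r V).
  by apply: eq_bigr => r _; rewrite subSS subKn // -ltnS.
rewrite (big_ord_widen N.+1 (fun r : nat => D i (a i - r)%N U * D i r V) hai).
by apply: eq_bigl => r.
Qed.

Lemma leibniz (a : M) y x :
  DM a (y * x) = \sum_(b | mle b a) DM (msub a b) y * DM b x.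
Proof.
rewrite /DM leibniz_l ?enum_uniq //; apply: eq_bigl => b; rewrite /Bs.
have -> : [forall j, (j \notin enum 'I_n) ==> ((b j : nat) == 0%N)].
  by apply/forallP => j; rewrite mem_enum.
by rewrite andbT.
Qed.

Lemma leibniz_comm (a : M) y x :
  DM a (y * x) - y * DM a x = \sum_(b | mlt b a) DM (msub a b) y * DM b x.
Proof.
rewrite leibniz (bigD1 a) ?mle_refl //= msub_aa DM0 addrC addrK.
by apply: eq_bigl => b; rewrite /mlt.
Qed.


Definition expn (m : nat) (c : M -> A) (x : A) : A :=
  \sum_(a : M | (deg a <= m)%N) c a * DM a x.

Lemma comm_expand m c z x :
  expn m c (z * x) - z * expn m c x =
  \sum_(b : M | (deg b < m)%N)
     (\sum_(a : M | (deg a <= m)%N && mlt b a) c a * DM (msub a b) z) * DM b x.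
Proof.
rewrite /expn mulr_sumr -sumrB.
transitivity (\sum_(a | (deg a <= m)%N) \sum_(b | mlt b a)
                 c a * (DM (msub a b) z * DM b x)).
  by apply: eq_bigr => a _; rewrite mulrCA -mulrBr leibniz_comm mulr_sumr.
rewrite (exchange_big_dep (fun b => (deg b < m)%N)).
  apply: eq_bigr => b _; rewrite mulr_suml; apply: eq_bigr => a _.
  by rewrite mulrA.
move=> a b ha hb; exact: leq_trans (mlt_deg hb) ha.
Qed.

Lemma expn_kl m c : klinear (expn m c).
Proof.
move=> r x y; rewrite /expn scaler_sumr -big_split; apply: eq_bigr => a _ /=.
by rewrite DM_kl mulrDr scalerAr.
Qed.

Lemma expn_diffop m c : diffop_le m (expn m c).
Proof.
elim: m c => [|m IH] c /=.
  exists (c mzero) => x; rewrite /expn (big_pred1 mzero) ?DM0 // => a.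
  by rewrite /= leqn0 deg_eq0.
split; first exact: expn_kl.
move=> y.
have -> : (fun x => expn m.+1 c (y * x) - y * expn m.+1 c x) =
  expn m (fun b => \sum_(a | (deg a <= m.+1)%N && mlt b a) c a * DM (msub a b) y).
  by apply: functional_extensionality => x; rewrite comm_expand.
exact: IH.
Qed.

Lemma deg_msub b a : mle b a -> deg a = (deg b + deg (msub a b))%N.
Proof.
move/forallP=> H; rewrite /deg -big_split; apply: eq_bigr => i _ /=.
by rewrite msubE subnKC // H.
Qed.

Lemma sum_next m (b : M) (F : M -> A) : deg b = m -> (m < N)%N ->
  \sum_(a | (deg a <= m.+1)%N && mlt b a) F a = \sum_(j < n) F (madd1 b j).
Proof.
move=> hb hm.
have hbN : (deg b < N)%N by rewrite hb.
transitivity (\sum_(a in [set madd1 b j | j in [set: 'I_n]]) F a); last first.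
  rewrite big_imset /=; first by apply: eq_bigl => j; rewrite in_setT.
  move=> j1 j2 _ _ E; have := congr1 (fun f : M => (f j1 : nat)) E.
  rewrite /= !madd1E // eqxx => /eqP; rewrite eqn_add2l.
  by case: (eqVneq j1 j2).
apply: eq_bigl => a; apply/idP/imsetP.
- case/andP => ha hlt; have hle := hlt; case/andP: hle => hle ne.
  have [j ltj] : exists j, (b j < a j)%N.
    apply/existsP; apply: contraR ne => /existsPn H2; apply/eqP/ffunP => i.
    apply/val_inj/eqP; rewrite eqn_leq (forallP hle i) /=; by rewrite leqNgt H2.
  have dm := deg_msub hle.
  have hdeg : (deg (msub a b) <= 1)%N.
    by rewrite -(leq_add2l (deg b)) -dm addn1 hb.
  move: hdeg; rewrite /deg (bigD1 j) //= msubE.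
  have h1 : (0 < a j - b j)%N by rewrite subn_gt0.
  move=> hdeg.
  have ej : (a j - b j = 1)%N.
    by apply/eqP; rewrite eqn_leq h1 andbT; apply: leq_trans hdeg; exact: leq_addr.
  have rest : (\sum_(i < n | i != j) (msub a b i : nat) == 0)%N.
    by move: hdeg; rewrite ej -[X in (_ <= X)%N](addn0 1) leq_add2l leqn0.
  move: rest; rewrite sum_nat_eq0 => /forallP rest.
  exists j; first by rewrite in_setT.
  apply/ffunP => i; apply/val_inj; rewrite /= madd1E //.
  case: (eqVneq i j) => [->|nij].
    have -> : nat_of_bool true = (a j - b j)%N by rewrite ej.
    by rewrite subnKC // ltnW.
  rewrite (_ : nat_of_bool false = 0%N) // addn0.
  have := rest i; rewrite nij /= msubE subn_eq0 => h.
  by apply/eqP; rewrite eqn_leq h (forallP hle i).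
- case=> j _ ->; rewrite deg_madd1 // hb leqnn /=.
  apply/andP; split.
    by apply/forallP => i; rewrite madd1E // leq_addr.
  apply/eqP => E; have := congr1 deg E; rewrite deg_madd1 //.
  by move/eqP; rewrite eq_sym (gtn_eqF (ltnSn _)).
Qed.

Lemma DM_next (b : M) j y : (deg b < N)%N -> DM (msub (madd1 b j) b) y = D j 1 y.
Proof.
move=> h; apply: DM_unit => i; by rewrite msubE madd1E // addKn.
Qed.


Hypothesis hfree : forall c : 'I_n -> A,
     (forall x, \sum_(j < n) c j * D j 1%N x = 0) -> forall j, c j = 0.

Lemma expn_mzero c x : expn 0 c x = c mzero * x.
Proof.
rewrite /expn (big_pred1 mzero) ?DM0 // => a.
by rewrite /= leqn0 deg_eq0.
Qed.

Lemma exists_pos (a : M) : (0 < deg a)%N -> exists j, (0 < a j)%N.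
Proof.
move=> h; case: (pickP (fun j => (0 < a j)%N)) => [j hj|H0]; first by exists j.
have : deg a == 0%N.
  rewrite /deg sum_nat_eq0; apply/forallP => i.
  by rewrite -leqn0 leqNgt H0.
by move/eqP => E; rewrite E in h.
Qed.

Lemma pred_index (a : M) m : deg a = m.+1 -> (m < N)%N ->
  exists b j, [/\ deg b = m, madd1 b j = a & (deg b < N)%N].
Proof.
move=> ha hm; have [j hj] : exists j, (0 < a j)%N by apply: exists_pos; rewrite ha.
set b := msub1 a j.
have hlt : mlt b a.
  apply/andP; split.
    by apply/forallP => i; rewrite msub1E leq_subr.
  apply/eqP => E; have := congr1 (fun f : M => (f j : nat)) E.
  rewrite /= msub1E eqxx => E1.
  have : (a j - 1 < a j)%N by rewrite subn1 ltn_predL.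
  by rewrite [X in (X < _)%N]E1 ltnn.
have hbN : (deg b < N)%N by apply: leq_trans (mlt_deg hlt) _; rewrite ha.
have eab : madd1 b j = a.
  apply/ffunP => i; apply/val_inj; rewrite /= madd1E // msub1E.
  case: (eqVneq i j) => [->|nij] /=; last by rewrite subn0 addn0.
  by rewrite subnK.
exists b, j; split => //.
by move: ha; rewrite -eab deg_madd1 // => [[]].
Qed.

Lemma expn_top m c : (forall a, deg a = m.+1 -> c a = 0) ->
  forall x, expn m.+1 c x = expn m c x.
Proof.
move=> H x; rewrite /expn (bigID (fun a => (deg a <= m)%N)) /=.
rewrite [X in _ + X]big1 ?addr0.
  by apply: eq_bigl => a; apply/andb_idl => h; apply: leqW.
move=> a /andP [h1 h2]; rewrite H ?mul0r //.
by apply/eqP; rewrite eqn_leq h1 ltnNge.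
Qed.

Lemma uniq_expn m c : (m <= N)%N -> (forall x, expn m c x = 0) ->
  forall a, (deg a <= m)%N -> c a = 0.
Proof.
elim: m c => [|m IH] c hm H a ha.
  have := H 1; rewrite expn_mzero mulr1.
  by move: ha; rewrite leqn0 deg_eq0 => /eqP ->.
have H2 y b : (deg b <= m)%N ->
    \sum_(a | (deg a <= m.+1)%N && mlt b a) c a * DM (msub a b) y = 0.
  move=> hb; apply: (IH (fun b => \sum_(a | (deg a <= m.+1)%N && mlt b a) c a * DM (msub a b) y) _ _ b hb); first exact: ltnW.
  move=> x; have := comm_expand m.+1 c y x; rewrite !H mulr0 subrr => E.
  by rewrite /expn; symmetry; exact: E.
have Htop a0 : deg a0 = m.+1 -> c a0 = 0.
  move=> ha0; have [b [j [hb eab hbN]]] := pred_index ha0 hm.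
  have HH y : \sum_(j < n) c (madd1 b j) * D j 1 y = 0.
    have := H2 y b; rewrite hb leqnn => /(_ isT).
    rewrite (sum_next _ hb hm) => E; rewrite -[RHS]E.
    apply: eq_bigr => i _; by rewrite DM_next.
  by rewrite -eab (hfree HH).
have := IH c (ltnW hm); rewrite -/(is_true _).
case: (ltngtP (deg a) m.+1) => [hl|hg|he].
- apply => //; move=> x; by rewrite -expn_top.
- by rewrite ltnNge ha in hg.
- by move=> _; apply: Htop.
Qed.


Lemma expnD m c1 c2 x : expn m (fun a => c1 a + c2 a) x = expn m c1 x + expn m c2 x.
Proof. by rewrite /expn -big_split; apply: eq_bigr => a _; rewrite mulrDl. Qed.

Lemma expnB m c1 c2 x : expn m (fun a => c1 a - c2 a) x = expn m c1 x - expn m c2 x.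
Proof. by rewrite /expn -sumrB; apply: eq_bigr => a _; rewrite mulrBl. Qed.

Lemma expnZ m r c x : expn m (fun a => r *: c a) x = r *: expn m c x.
Proof. by rewrite /expn scaler_sumr; apply: eq_bigr => a _; rewrite scalerAl. Qed.

Lemma expnM m y c x : expn m (fun a => y * c a) x = y * expn m c x.
Proof. by rewrite /expn mulr_sumr; apply: eq_bigr => a _; rewrite mulrA. Qed.

Lemma expn_inj m c1 c2 : (m <= N)%N -> (forall x, expn m c1 x = expn m c2 x) ->
  forall a, (deg a <= m)%N -> c1 a = c2 a.
Proof.
move=> hm H a ha; apply/eqP; rewrite -subr_eq0; apply/eqP.
apply: (uniq_expn (c := fun a => c1 a - c2 a) hm) ha => x.
by rewrite expnB H subrr.
Qed.

Lemma expn_widen m m' c x : (m <= m')%N ->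
  expn m c x = expn m' (fun a => if (deg a <= m)%N then c a else 0) x.
Proof.
move=> hmm; rewrite /expn (bigID (fun b => (deg b <= m)%N) (fun b => (deg b <= m')%N)) /=.
rewrite [X in _ = _ + X]big1 ?addr0.
  apply: eq_big => [b|b hb]; last by rewrite hb.
  by apply/idP/idP => [h|/andP [] //]; rewrite h andbT (leq_trans h).
by move=> b /andP [_ /negbTE ->]; rewrite mul0r.
Qed.

Lemma expn_low m e x :
  expn m (fun b => if (deg b < m)%N then e b else 0) x =
  \sum_(b | (deg b < m)%N) e b * DM b x.
Proof.
rewrite /expn (bigID (fun b => (deg b < m)%N)) /=.
rewrite [X in _ + X = _]big1 ?addr0.
  apply: eq_big => [b|b hb]; last by case/andP: hb => _ ->.
  by apply/idP/idP => [/andP [] //|h]; rewrite h ltnW.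
by move=> b /andP [_ /negbTE ->]; rewrite mul0r.
Qed.

Lemma deg_msub1 (a : M) j : (0 < a j)%N -> (deg (msub1 a j)).+1 = deg a.
Proof.
move=> h; rewrite /deg (bigD1 j) //= [X in _ = X](bigD1 j) //= msub1E eqxx.
rewrite -addSn subn1 prednK //; congr (_ + _)%N; apply: eq_bigr => i nij.
by rewrite msub1E (negbTE nij) subn0.
Qed.

Lemma madd1_msub1 (a : M) j : (0 < a j)%N -> madd1 (msub1 a j) j = a.
Proof.
move=> h; apply/ffunP => i; apply/val_inj; rewrite /= ffunE msub1E.
case: (eqVneq i j) => [->|nij] /=; last by rewrite subn0 addn0 inord_val.
by rewrite subnK // inord_val.
Qed.

Lemma msub1_madd1 (b : M) j : (deg b < N)%N -> msub1 (madd1 b j) j = b.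
Proof.
move=> h; apply/ffunP => i; apply/val_inj; rewrite /= ffunE madd1E //.
by rewrite addnK inord_val.
Qed.

Lemma msub1_madd1_swap (b : M) j j0 : (deg b < N)%N -> j != j0 -> (0 < b j0)%N ->
  msub1 (madd1 b j) j0 = madd1 (msub1 b j0) j.
Proof.
move=> h nj hb; apply/ffunP => i; rewrite [LHS]ffunE [RHS]ffunE madd1E // msub1E.
congr inord.
case: (eqVneq i j) => [->|nij]; first by rewrite (negbTE nj) /= !subn0.
case: (eqVneq i j0) => [->|nij0] /=; last by rewrite !addn0 !subn0.
by rewrite !addn0.
Qed.

Lemma swap4 (a b c d : A) : a - b - (c - d) = a - c - (b - d).
Proof.
rewrite !opprB !addrA.
by rewrite [LHS]addrAC [X in X + d]addrAC [LHS]addrAC.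
Qed.

Lemma alg5 (X Y V W : A) : W - V = X + (Y - V) + (W - Y - X).
Proof. by rewrite [RHS]addrC !addrA !subrK. Qed.

Lemma diffop_from_comm m (Q : A -> A) (e : A -> M -> A) : klinear Q ->
  (forall y x, Q (y * x) - y * Q x = expn m (e y) x) ->
  (forall y b, deg b = m -> e y b = 0) -> diffop_le m Q.
Proof.
move=> hkl H He; case: m H He => [|m] H He /=.
  exists (Q 1) => y; have := H y 1; rewrite mulr1 expn_mzero He ?deg_mzero //.
  by rewrite mul0r => /eqP; rewrite subr_eq0 => /eqP ->; rewrite mulrC.
split => // y.
have -> : (fun x => Q (y * x) - y * Q x) = expn m (e y).
  apply: functional_extensionality => x; rewrite H expn_top //.
  by move=> a ha; apply: He.
exact: expn_diffop.
Qed.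


Hypothesis hspan : forall f : A -> A, is_der f ->
     exists c : 'I_n -> A, forall x, f x = \sum_(j < n) c j * D j 1%N x.

Lemma exist_expn m P : (m <= N)%N -> diffop_le m P ->
  exists c, forall x, P x = expn m c x.
Proof.
elim: m P => [|m IH] P hm /=.
  by case=> a Ha; exists (fun _ => a) => x; rewrite expn_mzero Ha.
case=> hkl hcomm.
have hmN : (m <= N)%N := ltnW hm.
have hc y : exists c, forall x, P (y * x) - y * P x = expn m c x.
  exact: IH hmN (hcomm y).
pose c y := proj1_sig (constructive_indefinite_description _ (hc y)).
have hcE y x : P (y * x) - y * P x = expn m (c y) x.
  exact: (proj2_sig (constructive_indefinite_description _ (hc y))).
have hder b : deg b = m -> is_der (fun y => c y b).
  move=> hb; split.
  - move=> r y y'.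
    have key : forall x, expn m (c (r *: y + y')) x =
                         expn m (fun a => r *: c y a + c y' a) x.
      move=> x; rewrite expnD expnZ -!hcE mulrDl -scalerAl hkl mulrDl -scalerAl.
      by rewrite scalerBr opprD addrACA.
    by apply: (expn_inj hmN key); rewrite hb.
  - move=> y z.
    pose E := fun a => \sum_(a' | (deg a' <= m)%N && mlt a a') c y a' * DM (msub a' a) z.
    have key : forall x, expn m (c (y * z)) x =
       expn m (fun a => z * c y a + y * c z a + (if (deg a < m)%N then E a else 0)) x.
      move=> x; rewrite !expnD expn_low !expnM -comm_expand -!hcE.
      rewrite -!mulrA [y * (_ - _)]mulrBr; exact: alg5.
    have := expn_inj hmN key (a := b); rewrite hb leqnn ltnn addr0 => /(_ isT) ->.
    by rewrite mulrC.
have hh b : exists hb : 'I_n -> A, deg b = m ->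
              forall y, c y b = \sum_(j < n) hb j * D j 1 y.
  case: (eqVneq (deg b) m) => e; last by exists (fun _ => 0) => E; rewrite E eqxx in e.
  have [hb Hh] := hspan (hder b e); by exists hb => _ y; exact: Hh.
pose h b := proj1_sig (constructive_indefinite_description _ (hh b)).
have hhE b : deg b = m -> forall y, c y b = \sum_(j < n) h b j * D j 1 y.
  exact: (proj2_sig (constructive_indefinite_description _ (hh b))).
have hsym g : (deg g).+1 = m -> forall i j, h (madd1 g i) j = h (madd1 g j) i.
  move=> hg.
  have hgN : (deg g < N)%N by rewrite ltnW // hg.
  pose F y z := fun b => \sum_(a | (deg a <= m)%N && mlt b a) c y a * DM (msub a b) z.
  have E1 y z x : expn (deg g) (F y z) x = expn m (c y) (z * x) - z * expn m (c y) x.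
    by rewrite comm_expand /expn; apply: eq_bigl => b; rewrite -hg ltnS.
  have key y z x : expn (deg g) (F y z) x = expn (deg g) (F z y) x.
    rewrite !E1 -!hcE (mulrCA z y x) !mulrBr (mulrCA z y (P x)).
    exact: swap4.
  have hyz y z : \sum_(i < n) c y (madd1 g i) * D i 1 z =
                 \sum_(i < n) c z (madd1 g i) * D i 1 y.
    have := expn_inj (ltnW hgN) (key y z) (a := g) (leqnn _).
    rewrite /F -hg !(sum_next _ erefl hgN) => EE.
    transitivity (\sum_(i < n) c y (madd1 g i) * DM (msub (madd1 g i) g) z).
      by apply: eq_bigr => i _; rewrite DM_next.
    rewrite EE; apply: eq_bigr => i _; by rewrite DM_next.
  have hdm i : deg (madd1 g i) = m by rewrite deg_madd1.
  pose H i j := h (madd1 g i) j.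
  have S1 y : forall i, \sum_(j < n) H i j * D j 1 y - \sum_(j < n) H j i * D j 1 y = 0.
    apply: hfree => z.
    rewrite (eq_bigr (fun i => \sum_(j < n) H i j * D j 1 y * D i 1 z
                               - \sum_(j < n) H j i * D j 1 y * D i 1 z)); last first.
      by move=> i _; rewrite mulrBl !mulr_suml.
    rewrite sumrB; apply/eqP; rewrite subr_eq0; apply/eqP.
    transitivity (\sum_(i < n) c y (madd1 g i) * D i 1 z).
      by apply: eq_bigr => i _; rewrite hhE // mulr_suml.
    rewrite hyz exchange_big /=; apply: eq_bigr => i _.
    rewrite hhE // mulr_suml; apply: eq_bigr => j _.
    by rewrite /H -mulrA (mulrC (D j 1 z)) mulrA.
  move=> i j.
  apply/eqP; rewrite -subr_eq0; apply/eqP.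
  apply: (hfree (c := fun j => H i j - H j i)) => y.
  rewrite -[RHS](S1 y i) -sumrB; apply: eq_bigr => j' _; by rewrite mulrBl.
have hmN' : (m < N)%N := hm.
pose gg (a : M) := if [pick j | (0 < a j)%N] is Some j then h (msub1 a j) j else 0.
have hgg b j : deg b = m -> gg (madd1 b j) = h b j.
  move=> hb; have hbN : (deg b < N)%N by rewrite hb.
  rewrite /gg; case: pickP => [j0 hj0|H0]; last first.
    by have := H0 j; rewrite madd1E // eqxx addn1.
  case: (eqVneq j0 j) => [->|nj]; first by rewrite msub1_madd1.
  have hb0 : (0 < b j0)%N by move: hj0; rewrite madd1E // (negbTE nj) addn0.
  rewrite eq_sym in nj; rewrite msub1_madd1_swap // hsym; last first.
    by rewrite deg_msub1.
  by rewrite madd1_msub1.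
pose gt (a : M) := if deg a == m.+1 then gg a else 0.
pose P' x := P x - expn m.+1 gt x.
pose e y b := c y b - \sum_(a | (deg a <= m.+1)%N && mlt b a) gt a * DM (msub a b) y.
have hP' : diffop_le m P'.
  apply: (diffop_from_comm (e := e)).
  - move=> r x x'; rewrite /P' hkl expn_kl scalerBr opprD addrACA //.
  - move=> y x; rewrite expnB -hcE.
    transitivity (P (y * x) - y * P x - (expn m.+1 gt (y * x) - y * expn m.+1 gt x)).
      by rewrite /P' mulrBr swap4.
    by rewrite comm_expand.
  - move=> y b hb; rewrite /e (sum_next _ hb hmN') hhE //; apply/eqP.
    rewrite subr_eq0; apply/eqP; apply: eq_bigr => i _.
    by rewrite /gt deg_madd1 ?hb // eqxx hgg // DM_next ?hb.
have [c' Hc'] := IH P' hmN hP'.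
exists (fun a => (if (deg a <= m)%N then c' a else 0) + gt a) => x.
by rewrite expnD -expn_widen // -Hc' /P' subrK.
Qed.

End Main.

Theorem mainTheorem15 (k : comPzRingType) (A : comAlgType k) (n : nat)
  (D : 'I_n -> nat -> A -> A)
  (hHS : forall j, is_HS (D j))
  (hIder : forall f : A -> A, is_ider f <-> is_der f)
  (hspan : forall f : A -> A, is_der f ->
     exists c : 'I_n -> A, forall x, f x = \sum_(j < n) c j * D j 1%N x)
  (hfree : forall c : 'I_n -> A,
     (forall x, \sum_(j < n) c j * D j 1%N x = 0) -> forall j, c j = 0)
  (d : nat) (P : A -> A) (hP : diffop_le d P) :
  (exists a : {ffun 'I_n -> 'I_d.+1} -> A,
     forall x, P x = \sum_(alpha : {ffun 'I_n -> 'I_d.+1} |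
                            (\sum_(i < n) (alpha i : nat) <= d)%N)
                       a alpha * Dmulti D (fun i => (alpha i : nat)) x) /\
  (forall a b : {ffun 'I_n -> 'I_d.+1} -> A,
     (forall x, P x = \sum_(alpha : {ffun 'I_n -> 'I_d.+1} |
                            (\sum_(i < n) (alpha i : nat) <= d)%N)
                       a alpha * Dmulti D (fun i => (alpha i : nat)) x) ->
     (forall x, P x = \sum_(alpha : {ffun 'I_n -> 'I_d.+1} |
                            (\sum_(i < n) (alpha i : nat) <= d)%N)
                       b alpha * Dmulti D (fun i => (alpha i : nat)) x) ->
     forall alpha : {ffun 'I_n -> 'I_d.+1},
       (\sum_(i < n) (alpha i : nat) <= d)%N -> a alpha = b alpha).
Proof.
split.
  have [c Hc] := @exist_expn k A n D hHS d hfree hspan d P (leqnn d) hP.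
  by exists c => x; exact: Hc.
move=> a b Ha Hb alpha hal.
apply: (@expn_inj k A n D hHS d hfree d a b (leqnn d)) => // x.
exact: (etrans (esym (Ha x)) (Hb x)).
Qed.
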